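(* Let $\{a_n\},\{\rho_n\},\{\hat a_n\},\{\hat\rho_n\}$ ($n\ge1$) be sequences of positive numbers such that $\{\rho_n\}$ and $\{\hat\rho_n\}$ are strictly increasing with $\rho_n\to+\infty$, $\hat\rho_n\to+\infty$, and $\sum_{n\ge1}a_n\rho_n^{-2}<\infty$, $\sum_{n\ge1}\hat a_n\hat\rho_n^{-2}<\infty$. Let $\mu\in\mathbb R$, $\sigma\ge 0$ and let $\phi$ be the real meromorphic function \[ \phi(z)=\tfrac12\sigma^2z^2+\mu z+z^2\sum_{n\ge1}\frac{a_n}{\rho_n(\rho_n-z)}+z^2\sum_{n\ge1}\frac{\hat a_n}{\hat\rho_n(\hat\rho_n+z)}, \] (the Laplace exponent $\ln\mathbb E[e^{zX_1}]$ of the Lévy process $X$ with Gaussian coefficient $\sigma$, mean $\mathbb E[X_1]=\mu$ and Lévy density $\pi(x)=\mathbf 1(x>0)\sum_{n}a_n\rho_ne^{-\rho_nx}+\mathbf 1(x<0)\sum_n\hat a_n\hat\rho_ne^{\hat\rho_nx}$). Let $q>0$. Then the equation $\phi(z)=q$ has solutions $\{\zeta_n,-\hat\zeta_n\}_{n\ge1}$, where $\{\zeta_n\}_{n\ge1}$ and $\{\hat\zeta_n\}_{n\ge1}$ are sequences of positive numbers satisfying the interlacing property \[ 0<\zeta_1<\rho_1<\zeta_2<\rho_2<\cdots,\qquad 0<\hat\zeta_1<\hat\rho_1<\hat\zeta_2<\hat\rho_2<\cdots. \]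
   Context: $\mathbf 1(\cdot)$ denotes the indicator function. *)

(* Defs.v *)
From Stdlib Require Import Reals.
From Coquelicot Require Import Coquelicot.
Open Scope R_scope.

(* Sequences are indexed from 0: a 0 stands for a_1, rho 0 for rho_1, etc. *)

Definition phi_value (a rho ah rhoh : nat -> R) (mu sigma : R) (z w : C) : Prop :=
  exists S1 S2 : C,
    is_series (fun n => (RtoC (a n) / (RtoC (rho n) * (RtoC (rho n) - z)))%C) S1 /\
    is_series (fun n => (RtoC (ah n) / (RtoC (rhoh n) * (RtoC (rhoh n) + z)))%C) S2 /\
    w = (RtoC (sigma ^ 2 / 2) * (z * z) + RtoC mu * z + (z * z) * S1 + (z * z) * S2)%C.

Definition is_pole (rho rhoh : nat -> R) (z : C) : Prop :=
  exists n, z = RtoC (rho n) \/ z = RtoC (- rhoh n).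

(* Main.v *)
From Stdlib Require Import Reals Lra Lia ClassicalEpsilon.
Require Import Defs.
From Coquelicot Require Import Coquelicot.
Open Scope R_scope.

Lemma exs_scal (c : R) (a : nat -> R) : ex_series a -> ex_series (fun n => c * a n).
Proof. intros H. exact (ex_series_scal_l c a H). Qed.

Lemma Series_nonneg (b : nat -> R) : (forall n, 0 <= b n) -> ex_series b -> 0 <= Series b.
Proof.
  intros Hb He.
  assert (E : Series (fun n => 0 * b n) = 0) by (rewrite Series_scal_l; ring).
  rewrite <- E. apply Series_le; auto. intros n; split; [lra| rewrite Rmult_0_l; auto].
Qed.

Lemma Series_ge_term (b : nat -> R) k : (forall n, 0 <= b n) -> ex_series b -> b k <= Series b.
Proof.
  intros Hb He. rewrite (Series_incr_n b (S k)); [|lia|auto]. change (Init.Nat.pred (S k)) with k.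
  assert (0 <= Series (fun j => b (S k + j)%nat)).
  { apply Series_nonneg. auto. apply (ex_series_incr_n b (S k)). auto. }
  destruct k. change (sum_f_R0 b 0) with (b 0%nat). lra.
  change (sum_f_R0 b (S k)) with (sum_f_R0 b k + b (S k)).
  assert (0 <= sum_f_R0 b k) by (apply cond_pos_sum; auto). lra.
Qed.

Definition good (a r : nat -> R) := (forall n, 0 < a n) /\ (forall n, 0 < r n) /\
  (forall n, r n < r (S n)) /\ is_lim_seq r p_infty /\ ex_series (fun n => a n / r n ^ 2).

Definition nonpole (r : nat -> R) x := forall n, r n <> x.

Definition Tm (a r : nat -> R) x := Series (fun n => a n / (r n * (r n - x))).

Lemma r_le a r : good a r -> forall n k, r n <= r (n + k)%nat.
Proof.
  intros (_&_&Hi&_) n k. induction k. rewrite Nat.add_0_r; lra.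
  rewrite Nat.add_succ_r. specialize (Hi (n+k)%nat). lra.
Qed.

Lemma r_lt a r : good a r -> forall n m, (n < m)%nat -> r n < r m.
Proof.
  intros G n m H.
  replace m with (S n + (m - S n))%nat by lia. pose proof (r_le a r G (S n) (m - S n)).
  pose proof (proj1 (proj2 (proj2 G)) n). lra.
Qed.

Lemma r_le' a r : good a r -> forall n m, (n <= m)%nat -> r n <= r m.
Proof. intros G n m H. replace m with (n + (m - n))%nat by lia. apply (r_le a r G). Qed.

Lemma away a r x : good a r -> nonpole r x -> exists m, 0 < m /\ forall n, m * r n <= Rabs (r n - x).
Proof.
  intros G Hp. pose proof G as (Ha&Hr&Hi&Hl&Hs).
  apply is_lim_seq_spec in Hl. destruct (Hl (2 * Rabs x)) as [N HN].
  assert (Fin : forall K, exists m, 0 < m /\ forall n, (n < K)%nat -> m * r n <= Rabs (r n - x)).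
  { induction K. exists 1. split. lra. intros; lia.
    destruct IHK as [m [Hm HK]].
    assert (0 < Rabs (r K - x) / r K).
    { apply Rdiv_lt_0_compat; auto. apply Rabs_pos_lt. specialize (Hp K). lra. }
    exists (Rmin m (Rabs (r K - x) / r K)). split. apply Rmin_glb_lt; auto.
    intros n Hn. destruct (Nat.eq_dec n K).
    - subst. specialize (Hr K). apply Rle_trans with (Rabs (r K - x) / r K * r K).
      apply Rmult_le_compat_r. lra. apply Rmin_r. right; field; lra.
    - apply Rle_trans with (m * r n). apply Rmult_le_compat_r. specialize (Hr n); lra. apply Rmin_l.
      apply HK. lia. }
  destruct (Fin N) as [m [Hm HF]].
  exists (Rmin m (1/2)). split. apply Rmin_glb_lt; lra.
  intros n. destruct (Nat.lt_ge_cases n N).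
  - apply Rle_trans with (m * r n). apply Rmult_le_compat_r. specialize (Hr n); lra. apply Rmin_l. auto.
  - apply Rle_trans with (1/2 * r n). apply Rmult_le_compat_r. specialize (Hr n); lra. apply Rmin_r.
    specialize (HN n H). pose proof (Rabs_triang_inv (r n) x). rewrite (Rabs_pos_eq (r n)) in H0.
    lra. specialize (Hr n); lra.
Qed.

Lemma term_bound a r x m n : good a r -> 0 < m -> m * r n <= Rabs (r n - x) ->
  Rabs (a n / (r n * (r n - x))) <= / m * (a n / r n ^ 2).
Proof.
  intros (Ha&Hr&_) Hm H. specialize (Ha n). specialize (Hr n).
  assert (0 < Rabs (r n - x)) by (apply Rlt_le_trans with (m * r n); auto; apply Rmult_lt_0_compat; auto).
  assert (r n - x <> 0) by (intro E; rewrite E, Rabs_R0 in H0; lra).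
  replace (/ m * (a n / r n ^ 2)) with (a n / (r n * (m * r n))) by (field; lra).
  unfold Rdiv. rewrite Rabs_mult, Rabs_inv, Rabs_mult, (Rabs_pos_eq (a n)), (Rabs_pos_eq (r n)) by lra.
  unfold Rdiv. apply Rmult_le_compat_l. lra. apply Rinv_le_contravar.
  apply Rmult_lt_0_compat; auto. apply Rmult_lt_0_compat; auto. apply Rmult_le_compat_l; lra.
Qed.

Lemma ex_Tm a r x : good a r -> nonpole r x -> ex_series (fun n => a n / (r n * (r n - x))).
Proof.
  intros G Hp. destruct (away a r x G Hp) as [m [Hm Hb]].
  apply (ex_series_le (K:=R_AbsRing) (V:=R_CompleteNormedModule)) with (b := fun n => / m * (a n / r n ^ 2)).
  intros n. apply term_bound; auto.
  apply exs_scal. apply G.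
Qed.

Lemma A_diff a r x y : good a r -> nonpole r x -> nonpole r y ->
  y * Tm a r y - x * Tm a r x = Series (fun n => a n * (y - x) / ((r n - x) * (r n - y))).
Proof.
  intros G Hx Hy. unfold Tm. rewrite <- !Series_scal_l, <- Series_minus.
  2,3: apply exs_scal, ex_Tm; auto.
  apply Series_ext. intros n. pose proof (proj1 (proj2 G) n). specialize (Hx n). specialize (Hy n).
  field. repeat split; lra.
Qed.

Definition same (r : nat -> R) x y := forall n, 0 < (r n - x) * (r n - y).

Lemma same_np r x y : same r x y -> nonpole r x /\ nonpole r y.
Proof. intros H; split; intros n E; specialize (H n); rewrite E in H; lra. Qed.

Lemma diff_terms_nonneg a r x y : good a r -> x < y -> same r x y -> forall n, 0 <= a n * (y - x) / ((r n - x) * (r n - y)).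
Proof.
  intros G Hxy Hs n. pose proof (proj1 G n). specialize (Hs n).
  apply Rlt_le, Rdiv_lt_0_compat; auto. apply Rmult_lt_0_compat; lra.
Qed.

Lemma ex_diff a r x y : good a r -> nonpole r x -> nonpole r y ->
  ex_series (fun n => a n * (y - x) / ((r n - x) * (r n - y))).
Proof.
  intros G Hx Hy.
  assert (E : forall n, a n * (y - x) / ((r n - x) * (r n - y)) =
     (y * (a n / (r n * (r n - y)))) - x * (a n / (r n * (r n - x)))).
  { intros n. pose proof (proj1 (proj2 G) n). specialize (Hx n). specialize (Hy n).
    field. repeat split; lra. }
  eapply ex_series_ext. intros n; symmetry; apply E.
  destruct (exs_scal y _ (ex_Tm a r y G Hy)) as [l1 H1].
  destruct (exs_scal x _ (ex_Tm a r x G Hx)) as [l2 H2].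
  eexists. apply (is_series_minus _ _ _ _ H1 H2).
Qed.

Lemma A_mono a r x y : good a r -> x < y -> same r x y -> forall k,
  a k * (y - x) / ((r k - x) * (r k - y)) <= y * Tm a r y - x * Tm a r x.
Proof.
  intros G Hxy Hs k. destruct (same_np r x y Hs) as [Hx Hy].
  rewrite A_diff; auto. apply (Series_ge_term (fun n => a n * (y - x) / ((r n - x) * (r n - y))) k). apply diff_terms_nonneg; auto. apply ex_diff; auto.
Qed.

Lemma lip_cont (f : R -> R) x0 : (exists d K, 0 < d /\ forall y, Rabs (y - x0) < d -> Rabs (f y - f x0) <= K * Rabs (y - x0)) ->
  continuity_pt f x0.
Proof.
  intros [d [K [Hd HK]]]. unfold continuity_pt, continue_in, limit1_in, limit_in. intros eps Heps.
  exists (Rmin d (eps / (Rabs K + 1))). split. apply Rmin_glb_lt; auto. apply Rdiv_lt_0_compat; auto.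
  pose proof (Rabs_pos K); lra.
  intros y [_ Hy]. simpl in *. unfold R_dist in *.
  assert (Hy1 : Rabs (y - x0) < d) by (apply Rlt_le_trans with (1 := Hy); apply Rmin_l).
  assert (Hy2 : Rabs (y - x0) < eps / (Rabs K + 1)) by (apply Rlt_le_trans with (1 := Hy); apply Rmin_r).
  specialize (HK y Hy1). pose proof (Rabs_pos K). pose proof (Rabs_pos (y - x0)).
  apply Rle_lt_trans with (Rabs K * Rabs (y - x0)).
  apply Rle_trans with (1 := HK). apply Rmult_le_compat_r. auto. apply Rle_abs.
  apply Rle_lt_trans with ((Rabs K + 1) * Rabs (y - x0)). nra.
  apply Rmult_lt_compat_l with (r := Rabs K + 1) in Hy2. 2: lra.
  replace ((Rabs K + 1) * (eps / (Rabs K + 1))) with eps in Hy2 by (field; lra). lra.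
Qed.

Lemma A_cont a r x : good a r -> nonpole r x -> continuity_pt (fun t => t * Tm a r t) x.
Proof.
  intros G Hx. pose proof G as (Ha&Hr&_&_&Hs).
  destruct (away a r x G Hx) as [m [Hm Hb]].
  apply lip_cont. exists (m * r 0%nat / 2), (2 / (m * m) * Series (fun n => a n / r n ^ 2)).
  split. specialize (Hr 0%nat). apply Rdiv_lt_0_compat; [apply Rmult_lt_0_compat|]; lra.
  intros y Hy.
  assert (Hby : forall n, m * r n / 2 <= Rabs (r n - y)).
  { intros n. specialize (Hb n). pose proof (r_le' a r G 0 n ltac:(lia)).
    pose proof (Rabs_triang_inv (r n - x) (y - x)).
    replace (r n - x - (y - x)) with (r n - y) in H0 by ring. nra. }
  assert (Hny : nonpole r y).
  { intros n E. specialize (Hby n). rewrite E in Hby. unfold Rminus in Hby. rewrite Rplus_opp_r, Rabs_R0 in Hby.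
    specialize (Hr n). nra. }
  rewrite A_diff; auto.
  set (d := fun n => a n * (y - x) / ((r n - x) * (r n - y))).
  assert (Hd : forall n, Rabs (d n) <= 2 / (m * m) * Rabs (y - x) * (a n / r n ^ 2)).
  { intros n. unfold d. specialize (Ha n). specialize (Hr n). specialize (Hb n). specialize (Hby n).
    assert (0 < m * r n) by (apply Rmult_lt_0_compat; auto).
    assert (0 < Rabs (r n - x)) by lra. assert (0 < Rabs (r n - y)) by lra.
    unfold Rdiv. rewrite !Rabs_mult, Rabs_inv, Rabs_mult, (Rabs_pos_eq (a n)) by lra.
    replace (2 * / (m * m) * Rabs (y - x) * (a n * / r n ^ 2)) with
      (a n * Rabs (y - x) * / ((m * r n) * (m * r n / 2))) by (field; lra).
    apply Rmult_le_compat_l. apply Rmult_le_pos; [lra| apply Rabs_pos].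
    apply Rinv_le_contravar. apply Rmult_lt_0_compat; lra.
    apply Rmult_le_compat; lra. }
  assert (Hexb : ex_series (fun n => 2 / (m * m) * Rabs (y - x) * (a n / r n ^ 2))) by (apply exs_scal; auto).
  assert (Hexa : ex_series (fun n => Rabs (d n))).
  { apply (ex_series_le (K:=R_AbsRing) (V:=R_CompleteNormedModule)) with (2 := Hexb).
    intros n. change (norm (Rabs (d n))) with (Rabs (Rabs (d n))). rewrite Rabs_Rabsolu. auto. }
  apply Rle_trans with (1 := Series_Rabs d Hexa).
  apply Rle_trans with (Series (fun n => 2 / (m * m) * Rabs (y - x) * (a n / r n ^ 2))).
  apply Series_le; auto. intros n; split; [apply Rabs_pos | auto].
  rewrite Series_scal_l. right; ring.
Qed.

Definition lo (r : nat -> R) n := match n with O => 0 | S k => r k end.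
Definition gfun a r ah rh mu s q x :=
  s^2 * x / 2 + mu + x * Tm a r x - ((- x) * Tm ah rh (- x)) - q / x.

Lemma lo_nonneg a r n : good a r -> 0 <= lo r n.
Proof. intros G. destruct n; simpl. lra. pose proof (proj1 (proj2 G) n). lra. Qed.
Lemma lo_lt a r n : good a r -> lo r n < r n.
Proof. intros G. destruct n; simpl. apply G. apply G. Qed.

Lemma same_int a r n x y : good a r -> lo r n < x < r n -> lo r n < y < r n -> same r x y.
Proof.
  intros G Hx Hy k. destruct (Nat.lt_ge_cases k n).
  - destruct n. lia. simpl in *. pose proof (r_le' a r G k n ltac:(lia)). nra.
  - pose proof (r_le' a r G n k H). nra.
Qed.

Lemma same_neg a r x y : good a r -> x < 0 -> y < 0 -> same r x y.
Proof. intros G Hx Hy k. pose proof (proj1 (proj2 G) k). nra. Qed.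

Lemma g_diff a r ah rh mu s q x y : good a r -> good ah rh -> 0 < q -> 0 < x -> x < y -> same r x y ->
  forall k, q * (y - x) / (x * y) + a k * (y - x) / ((r k - x) * (r k - y)) <=
    gfun a r ah rh mu s q y - gfun a r ah rh mu s q x.
Proof.
  intros G Gh Hq Hx Hxy Hs k. unfold gfun.
  pose proof (A_mono a r x y G Hxy Hs k).
  assert (Hs2 : same rh (-y) (-x)) by (apply (same_neg ah); auto; lra).
  pose proof (A_mono ah rh (-y) (-x) Gh ltac:(lra) Hs2 0%nat).
  pose proof (diff_terms_nonneg ah rh (-y) (-x) Gh ltac:(lra) Hs2 0%nat).
  assert (0 <= s^2 * (y - x) / 2) by (apply Rmult_le_pos; [apply Rmult_le_pos; [apply pow2_ge_0|lra]|lra]).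
  assert (q / x - q / y = q * (y - x) / (x * y)) by (field; lra).
  lra.
Qed.

Lemma le_div (G N D : R) : 0 < D -> G * D <= N -> G <= N / D.
Proof. intros HD H. apply Rmult_le_reg_r with D; auto. replace (N / D * D) with N by (field; lra). lra. Qed.

Lemma gfun_cont a r ah rh mu s q x : good a r -> good ah rh -> 0 < x -> nonpole r x ->
  continuity_pt (gfun a r ah rh mu s q) x.
Proof.
  intros G Gh Hx Hp. unfold gfun.
  apply continuity_pt_minus. apply continuity_pt_minus. apply continuity_pt_plus. apply continuity_pt_plus.
  - apply continuity_pt_mult. apply continuity_pt_mult. apply continuity_pt_const; intros u v; reflexivity.
    apply continuity_pt_id. apply continuity_pt_const; intros u v; reflexivity.
  - apply continuity_pt_const; intros u v; reflexivity.
  - apply (A_cont a r x G Hp).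
  - change (continuity_pt (comp (fun t => t * Tm ah rh t) (fun t => - t)) x).
    apply continuity_pt_comp. apply continuity_pt_opp, continuity_pt_id.
    apply A_cont; auto. intros n E. pose proof (proj1 (proj2 Gh) n). lra.
  - apply continuity_pt_mult. apply continuity_pt_const; intros u v; reflexivity.
    apply continuity_pt_inv. apply continuity_pt_id. lra.
Qed.

Lemma key_ineq (G A w e : R) : 0 < G -> 0 < e -> 0 < w -> e <= w / 2 -> e <= A / (2 * G) ->
  G <= A * (w - e) / (w * e).
Proof.
  intros HG He Hw H1 H2. apply le_div. apply Rmult_lt_0_compat; auto.
  assert (2 * G * e <= A).
  { apply Rmult_le_compat_l with (r := 2 * G) in H2. 2: lra.
    replace (2 * G * (A / (2 * G))) with A in H2 by (field; lra). lra. }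
  assert (w / 2 <= w - e) by lra.
  assert (A * (w / 2) <= A * (w - e)) by (apply Rmult_le_compat_l; nra).
  assert (2 * G * e * (w / 2) <= A * (w / 2)) by (apply Rmult_le_compat_r; lra).
  nra.
Qed.

Lemma root_exists a r ah rh mu s q n : good a r -> good ah rh -> 0 < q ->
  exists x, lo r n < x < r n /\ gfun a r ah rh mu s q x = 0.
Proof.
  intros G Gh Hq.
  set (l := lo r n). set (rr := r n). set (g := gfun a r ah rh mu s q).
  assert (Hl : 0 <= l) by apply (lo_nonneg a), G.
  assert (Hlr : l < rr) by apply (lo_lt a), G.
  set (m := (l + rr) / 2).
  set (GG := Rabs (g m) + 1).
  assert (HG : 0 < GG) by (unfold GG; pose proof (Rabs_pos (g m)); lra).
  assert (Hgm : - GG < g m < GG) by (unfold GG; split; [pose proof (Rabs_maj2 (g m)) | pose proof (Rle_abs (g m))]; lra).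
  assert (Hpos : forall n, 0 < a n) by apply G.
  set (e := Rmin ((rr - m) / 2) (a n / (2 * GG))).
  assert (He : 0 < e).
  { apply Rmin_glb_lt. unfold m; lra. apply Rdiv_lt_0_compat. auto. lra. }
  assert (He1 : e <= (rr - m) / 2) by apply Rmin_l.
  assert (He2 : e <= a n / (2 * GG)) by apply Rmin_r.
  set (d := rr - e).
  assert (Hd : 0 < g d).
  { assert (Hs : same r m d).
    { apply (same_int a r n _ _ G); unfold m, d, l, rr in *; split; lra. }
    pose proof (g_diff a r ah rh mu s q m d G Gh Hq ltac:(unfold m; lra) ltac:(unfold d, m in *; lra) Hs n).
    fold g in H.
    assert (0 <= q * (d - m) / (m * d)).
    { apply Rlt_le, Rdiv_lt_0_compat. apply Rmult_lt_0_compat; unfold d, m in *; lra.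
      apply Rmult_lt_0_compat; unfold d, m in *; lra. }
    pose proof (key_ineq GG (a n) (rr - m) e HG He ltac:(unfold m; lra) He1 He2).
    replace (a n * (d - m) / ((r n - m) * (r n - d))) with (a n * (rr - m - e) / ((rr - m) * e)) in H
      by (unfold d, rr; f_equal; [f_equal; ring| ring]).
    lra. }
  assert (Hc : exists c, l < c < m /\ g c < 0).
  { destruct n as [|k].
    - simpl in l. set (c := Rmin (m / 2) (q / (2 * GG))).
      assert (Hc : 0 < c). { apply Rmin_glb_lt. unfold m, l in *; lra. apply Rdiv_lt_0_compat; lra. }
      assert (Hc1 : c <= m / 2) by apply Rmin_l.
      assert (Hc2 : c <= q / (2 * GG)) by apply Rmin_r.
      exists c. split. unfold l; simpl. unfold m, l in *; split; lra.
      assert (Hs : same r c m) by (apply (same_int a r 0 _ _ G); unfold m, l, rr in *; simpl in *; split; lra).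
      pose proof (g_diff a r ah rh mu s q c m G Gh Hq Hc ltac:(unfold m, l in *; lra) Hs 0%nat).
      fold g in H.
      pose proof (diff_terms_nonneg a r c m G ltac:(unfold m, l in *; lra) Hs 0%nat).
      pose proof (key_ineq GG q m c HG Hc ltac:(unfold m, l in *; lra) Hc1 Hc2).
      replace (q * (m - c) / (c * m)) with (q * (m - c) / (m * c)) in H by (f_equal; ring).
      lra.
    - simpl in l. set (e' := Rmin ((m - l) / 2) (a k / (2 * GG))).
      assert (He' : 0 < e'). { apply Rmin_glb_lt. unfold m; lra. apply Rdiv_lt_0_compat. auto. lra. }
      assert (He1' : e' <= (m - l) / 2) by apply Rmin_l.
      assert (He2' : e' <= a k / (2 * GG)) by apply Rmin_r.
      set (c := l + e').
      exists c. split. unfold c, m in *; split; lra.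
      assert (Hs : same r c m) by (apply (same_int a r (S k) _ _ G); unfold c, m, l, rr in *; simpl in *; split; lra).
      pose proof (g_diff a r ah rh mu s q c m G Gh Hq ltac:(unfold c; lra) ltac:(unfold c, m in *; lra) Hs k).
      fold g in H.
      assert (0 <= q * (m - c) / (c * m)).
      { apply Rlt_le, Rdiv_lt_0_compat. apply Rmult_lt_0_compat; unfold c, m in *; lra.
        apply Rmult_lt_0_compat; unfold c, m in *; lra. }
      pose proof (key_ineq GG (a k) (m - l) e' HG He' ltac:(unfold m; lra) He1' He2').
      replace (a k * (m - c) / ((r k - c) * (r k - m))) with (a k * (m - l - e') / ((m - l) * e')) in H
        by (unfold c, l; f_equal; [f_equal; ring| ring]).
      lra. }
  destruct Hc as [c [Hcm Hgc]].
  assert (Hcd : c < d) by (unfold d, m in *; lra).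
  destruct (Ranalysis5.IVT_interv g c d) as [z [Hz Hgz]]; auto.
  - intros t Ht. apply gfun_cont; auto. lra.
    apply (same_np r t t). apply (same_int a r n _ _ G); unfold d, m in *; fold l rr; split; lra.
  - exists z. split. unfold d, m in *; fold l rr; split; lra. exact Hgz.
Qed.

Lemma root_unique a r ah rh mu s q n x y : good a r -> good ah rh -> 0 < q ->
  lo r n < x < r n -> lo r n < y < r n ->
  gfun a r ah rh mu s q x = 0 -> gfun a r ah rh mu s q y = 0 -> x = y.
Proof.
  intros G Gh Hq Hx Hy Ex Ey.
  pose proof (lo_nonneg a r n G).
  assert (forall u v, lo r n < u < r n -> lo r n < v < r n -> u < v ->
     gfun a r ah rh mu s q u = 0 -> gfun a r ah rh mu s q v = 0 -> False).
  { intros u v Hu Hv Huv Eu Ev.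
    pose proof (g_diff a r ah rh mu s q u v G Gh Hq ltac:(lra) Huv (same_int a r n u v G Hu Hv) 0%nat).
    pose proof (diff_terms_nonneg a r u v G Huv (same_int a r n u v G Hu Hv) 0%nat).
    assert (0 < q * (v - u) / (u * v)).
    { apply Rdiv_lt_0_compat. apply Rmult_lt_0_compat; lra. apply Rmult_lt_0_compat; lra. }
    lra. }
  destruct (Rtotal_order x y) as [H1|[H1|H1]]; auto.
  exfalso; eauto. exfalso; eauto.
Qed.
Lemma re_sum (h : nat -> C) N : Re (sum_n h N) = sum_n (fun n => Re (h n)) N.
Proof. induction N. now rewrite !sum_O. rewrite !sum_Sn, <- IHN. reflexivity. Qed.
Lemma im_sum (h : nat -> C) N : Im (sum_n h N) = sum_n (fun n => Im (h n)) N.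
Proof. induction N. now rewrite !sum_O. rewrite !sum_Sn, <- IHN. reflexivity. Qed.

Lemma is_series_Re (h : nat -> C) S : is_series h S -> is_series (fun n => Re (h n)) (Re S).
Proof.
  intros H. unfold is_series in *.
  apply filterlim_ext with (fun N => Re (sum_n h N)). intros; apply re_sum.
  eapply filterlim_comp. exact H.
  destruct S as [s1 s2]. apply (continuous_fst (U:=R_UniformSpace) (V:=R_UniformSpace) s1 s2).
Qed.
Lemma is_series_Im (h : nat -> C) S : is_series h S -> is_series (fun n => Im (h n)) (Im S).
Proof.
  intros H. unfold is_series in *.
  apply filterlim_ext with (fun N => Im (sum_n h N)). intros; apply im_sum.
  eapply filterlim_comp. exact H.
  destruct S as [s1 s2]. apply (continuous_snd (U:=R_UniformSpace) (V:=R_UniformSpace) s1 s2).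
Qed.
Lemma is_series_RtoC (f : nat -> R) L : is_series f L -> is_series (fun n => RtoC (f n)) (RtoC L).
Proof.
  intros H. unfold is_series in *.
  apply filterlim_ext with (fun N => (sum_n f N, 0)).
  { intros N. induction N. rewrite !sum_O. reflexivity. rewrite !sum_Sn. rewrite <- IHN.
    unfold RtoC. apply injective_projections; simpl. reflexivity. change (0 = 0+0). ring. }
  apply (proj2 (filterlim_locally (T:=nat) (U:=C_UniformSpace) _ _)). intros eps.
  pose proof (proj1 (filterlim_locally (U:=R_UniformSpace) _ _) H eps) as H1. revert H1. apply filter_imp.
  intros N HN. split. exact HN. simpl. apply ball_center.
Qed.
Lemma im_term1 (x y r a : R) : r <> 0 -> y <> 0 ->
  Im ((x,y) * (RtoC a / (RtoC r * (RtoC r - (x,y)))))%C = a*y/((r-x)^2+y^2).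
Proof.
  intros Hr Hy. unfold Cdiv, Cinv, Cmult, Cminus, Cplus, Copp, RtoC. simpl.
  assert (0 < (r-x)^2 + y^2) by (apply Rplus_le_lt_0_compat; [apply pow2_ge_0| apply pow2_gt_0; auto]).
  assert (0 < r*r) by (apply Rsqr_pos_lt; auto).
  field. split. nra.
  replace (r * (r + - x) * (r * (r + - x)) + r * - y * (r * - y)) with (r*r*((r-x)^2+y^2)) by ring.
  apply Rgt_not_eq; apply Rmult_lt_0_compat; auto.
Qed.
Lemma im_term2 (x y r a : R) : r <> 0 -> y <> 0 ->
  Im ((x,y) * (RtoC a / (RtoC r * (RtoC r + (x,y)))))%C = a*y/((r+x)^2+y^2).
Proof.
  intros Hr Hy. unfold Cdiv, Cinv, Cmult, Cminus, Cplus, Copp, RtoC. simpl.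
  assert (0 < (r+x)^2 + y^2) by (apply Rplus_le_lt_0_compat; [apply pow2_ge_0| apply pow2_gt_0; auto]).
  assert (0 < r*r) by (apply Rsqr_pos_lt; auto).
  field. split. nra.
  replace (r * (r + x) * (r * (r + x)) + r * y * (r * y)) with (r*r*((r+x)^2+y^2)) by ring.
  apply Rgt_not_eq; apply Rmult_lt_0_compat; auto.
Qed.

Lemma ser_nonneg (u : nat -> R) L : is_series u L -> (forall n, 0 <= u n) -> 0 <= L.
Proof.
  intros H Hu. rewrite <- (is_series_unique u L H). apply Series_nonneg; auto. exists L; auto.
Qed.

Lemma eq_contra (x y q s mu p1 i1 p2 i2 : R) : y <> 0 -> 0 < q -> 0 <= y*i1 -> 0 <= y*i2 ->
  RtoC q = (RtoC s * ((x,y) * (x,y)) + RtoC mu * (x,y) + (x,y) * (p1,i1) + (x,y)*(p2,i2))%C -> 0 <= s -> False.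
Proof.
  intros Hy Hq H1 H2 E Hs.
  apply (f_equal (fun c => Im (Cconj (x,y) * c)%C)) in E.
  unfold Cconj, Cmult, Cplus, RtoC in E. simpl in E.
  assert (E2 : - q * y * y = (x*x+y*y) * (s*y*y + y*i1 + y*i2)) by nra.
  assert (0 < y*y) by (apply Rsqr_pos_lt; auto).
  assert (0 <= x*x) by apply Rle_0_sqr.
  assert (0 <= (x*x+y*y) * (s*y*y + y*i1 + y*i2)).
  { apply Rmult_le_pos. lra. assert (0 <= s*(y*y)) by (apply Rmult_le_pos; lra). nra. }
  assert (0 < q*(y*y)) by (apply Rmult_lt_0_compat; lra). nra.
Qed.

Lemma im_pos_series (a r : nat -> R) (x y : R) S (sg : bool) :
  (forall n, 0 < a n) -> (forall n, 0 < r n) -> y <> 0 ->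
  is_series (fun n => (RtoC (a n) / (RtoC (r n) * (if sg then RtoC (r n) - (x,y) else RtoC (r n) + (x,y))))%C) S ->
  0 <= y * Im ((x,y) * S)%C.
Proof.
  intros Ha Hr Hy H.
  apply (is_series_scal (K:=C_AbsRing) (V:=C_NormedModule) (x,y)) in H.
  apply is_series_Im in H.
  apply (is_series_scal (K:=R_AbsRing) (V:=R_NormedModule) y) in H.
  assert (H' : is_series (fun n => y * Im ((x,y) * (RtoC (a n) / (RtoC (r n) * (if sg then RtoC (r n) - (x,y) else RtoC (r n) + (x,y)))))%C) (y * Im ((x,y) * S)%C)).
  { revert H. apply is_series_ext. intros n; reflexivity. }
  apply (ser_nonneg _ _ H'). intros n. specialize (Ha n). specialize (Hr n).
  assert (0 < y*y) by (apply Rsqr_pos_lt; auto).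
  destruct sg.
  - rewrite im_term1 by lra.
    assert (0 < (r n - x)^2 + y^2) by (apply Rplus_le_lt_0_compat; [apply pow2_ge_0| apply pow2_gt_0; auto]).
    replace (y * (a n * y / ((r n - x) ^ 2 + y ^ 2))) with (a n * (y*y) / ((r n - x) ^ 2 + y ^ 2)) by (field; lra).
    apply Rlt_le, Rdiv_lt_0_compat; auto. apply Rmult_lt_0_compat; auto.
  - rewrite im_term2 by lra.
    assert (0 < (r n + x)^2 + y^2) by (apply Rplus_le_lt_0_compat; [apply pow2_ge_0| apply pow2_gt_0; auto]).
    replace (y * (a n * y / ((r n + x) ^ 2 + y ^ 2))) with (a n * (y*y) / ((r n + x) ^ 2 + y ^ 2)) by (field; lra).
    apply Rlt_le, Rdiv_lt_0_compat; auto. apply Rmult_lt_0_compat; auto.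
Qed.

Lemma nonreal a rho ah rhoh mu sigma q x y :
  (forall n, 0 < a n) -> (forall n, 0 < rho n) -> (forall n, 0 < ah n) -> (forall n, 0 < rhoh n) ->
  0 < q -> y <> 0 -> ~ phi_value a rho ah rhoh mu sigma (x,y) (RtoC q).
Proof.
  intros Ha Hr Hah Hrh Hq Hy [S1 [S2 [H1 [H2 E]]]].
  pose proof (im_pos_series a rho x y S1 true Ha Hr Hy H1) as I1.
  pose proof (im_pos_series ah rhoh x y S2 false Hah Hrh Hy H2) as I2.
  rewrite <- (Cmult_assoc (x,y) (x,y) S1), <- (Cmult_assoc (x,y) (x,y) S2) in E.
  destruct ((x,y) * S1)%C as [p1 i1]. destruct ((x,y) * S2)%C as [p2 i2].
  simpl in I1, I2.
  apply (eq_contra x y q (sigma ^ 2 / 2) mu p1 i1 p2 i2 Hy Hq I1 I2 E).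
  apply Rmult_le_pos. apply pow2_ge_0. lra.
Qed.

Lemma Cser_to_R (f : nat -> R) S : is_series (fun n => RtoC (f n)) S -> ex_series f /\ S = RtoC (Series f).
Proof.
  intros H.
  pose proof (is_series_Re _ _ H) as HR. pose proof (is_series_Im _ _ H) as HI.
  assert (HR' : is_series f (Re S)) by (revert HR; apply is_series_ext; intros; reflexivity).
  assert (HI' : is_series (fun n => 0 * f n) (Im S)) by (revert HI; apply is_series_ext; intros; simpl; ring).
  split. exists (Re S); auto.
  apply is_series_unique in HI'. rewrite Series_scal_l, Rmult_0_l in HI'.
  apply is_series_unique in HR'. destruct S as [s1 s2]. simpl in *. unfold RtoC. rewrite HR', HI'. reflexivity.
Qed.

Lemma R_to_Cser (f : nat -> R) : ex_series f -> is_series (fun n => RtoC (f n)) (RtoC (Series f)).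
Proof. intros H. apply is_series_RtoC. apply Series_correct; auto. Qed.

Lemma term_conv (a r x : R) : r <> 0 -> r - x <> 0 ->
  (RtoC a / (RtoC r * (RtoC r - RtoC x)))%C = RtoC (a / (r * (r - x))).
Proof.
  intros H1 H2. rewrite <- RtoC_minus, <- RtoC_mult, <- RtoC_div. reflexivity.
  apply Rmult_integral_contrapositive_currified; auto.
Qed.
Lemma term_conv2 (a r x : R) : r <> 0 -> r - - x <> 0 ->
  (RtoC a / (RtoC r * (RtoC r + RtoC x)))%C = RtoC (a / (r * (r - - x))).
Proof.
  intros H1 H2. rewrite <- RtoC_plus, <- RtoC_mult, <- RtoC_div.
  replace (r + x) with (r - - x) by ring. reflexivity.
  apply Rmult_integral_contrapositive_currified; auto. replace (r + x) with (r - - x) by ring. auto.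
Qed.

Lemma real_link a rho ah rhoh mu sigma q x : good a rho -> good ah rhoh -> x <> 0 ->
  nonpole rho x -> nonpole rhoh (- x) ->
  (phi_value a rho ah rhoh mu sigma (RtoC x) (RtoC q) <-> gfun a rho ah rhoh mu sigma q x = 0).
Proof.
  intros G Gh Hx Hp Hph.
  assert (E1 : forall n, (RtoC (a n) / (RtoC (rho n) * (RtoC (rho n) - RtoC x)))%C = RtoC (a n / (rho n * (rho n - x)))).
  { intros n. apply term_conv. pose proof (proj1 (proj2 G) n); lra. specialize (Hp n); lra. }
  assert (E2 : forall n, (RtoC (ah n) / (RtoC (rhoh n) * (RtoC (rhoh n) + RtoC x)))%C = RtoC (ah n / (rhoh n * (rhoh n - - x)))).
  { intros n. apply term_conv2. pose proof (proj1 (proj2 Gh) n); lra. specialize (Hph n); lra. }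
  assert (Hreal : forall t1 t2 : R,
     (RtoC (sigma ^ 2 / 2) * (RtoC x * RtoC x) + RtoC mu * RtoC x + (RtoC x * RtoC x) * RtoC t1 + (RtoC x * RtoC x) * RtoC t2)%C
     = RtoC (sigma ^ 2 / 2 * (x * x) + mu * x + (x * x) * t1 + (x * x) * t2)).
  { intros. rewrite <- !RtoC_mult, <- !RtoC_plus. reflexivity. }
  unfold gfun, Tm. split.
  - intros [S1 [S2 [H1 [H2 E]]]].
    apply (is_series_ext _ _ _ E1) in H1. apply (is_series_ext _ _ _ E2) in H2.
    apply Cser_to_R in H1. apply Cser_to_R in H2. destruct H1 as [_ ->]. destruct H2 as [_ ->].
    rewrite Hreal in E. apply (f_equal Re) in E. simpl in E.
    rewrite E. field. auto.
  - intros Hg. exists (RtoC (Series (fun n => a n / (rho n * (rho n - x))))).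
    exists (RtoC (Series (fun n => ah n / (rhoh n * (rhoh n - - x))))).
    split. eapply is_series_ext. intros n; symmetry; apply E1. apply R_to_Cser, ex_Tm; auto.
    split. eapply is_series_ext. intros n; symmetry; apply E2. apply R_to_Cser, ex_Tm; auto.
    rewrite Hreal. f_equal.
    apply Rmult_eq_compat_l with (r := x) in Hg. rewrite Rmult_0_r in Hg.
    replace q with (x * (q / x)) by (field; auto).
    match type of Hg with x * ?A = 0 => replace (x * (q / x)) with (x * (q / x) + x * A) by (rewrite Hg; ring) end.
    field. auto.
Qed.

Lemma swap_g a r ah rh mu s q x : x <> 0 ->
  gfun ah rh a r (- mu) s q (- x) = - gfun a r ah rh mu s q x.
Proof. intros Hx. unfold gfun. rewrite Ropp_involutive. field. auto. Qed.

Lemma locate a r x : good a r -> 0 < x -> nonpole r x -> exists n, lo r n < x < r n.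
Proof.
  intros G Hx Hp. pose proof G as (_&_&_&Hl&_). apply is_lim_seq_spec in Hl.
  destruct (Hl x) as [N HN]. specialize (HN N (le_n N)).
  clear Hl. induction N.
  - exists 0%nat. simpl. lra.
  - destruct (Rlt_le_dec x (r N)). auto.
    exists (S N). simpl. specialize (Hp N). lra.
Qed.

Theorem proposition3
  (a rho ah rhoh : nat -> R) (mu sigma q : R)
  (Ha : forall n, 0 < a n) (Hrho : forall n, 0 < rho n)
  (Hah : forall n, 0 < ah n) (Hrhoh : forall n, 0 < rhoh n)
  (Hrho_inc : forall n, rho n < rho (S n))
  (Hrhoh_inc : forall n, rhoh n < rhoh (S n))
  (Hrho_lim : is_lim_seq rho p_infty)
  (Hrhoh_lim : is_lim_seq rhoh p_infty)
  (Hsum : ex_series (fun n => a n / (rho n ^ 2)))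
  (Hsumh : ex_series (fun n => ah n / (rhoh n ^ 2)))
  (Hsigma : 0 <= sigma) (Hq : 0 < q) :
  exists zeta zetah : nat -> R,
    (forall n, 0 < zeta n) /\ (forall n, 0 < zetah n) /\
    (forall n, zeta n < rho n /\ rho n < zeta (S n)) /\
    (forall n, zetah n < rhoh n /\ rhoh n < zetah (S n)) /\
    (forall z : C, ~ is_pole rho rhoh z ->
       (phi_value a rho ah rhoh mu sigma z (RtoC q) <->
        exists n, z = RtoC (zeta n) \/ z = RtoC (- zetah n))).
Proof.
  assert (G : good a rho) by (repeat split; auto).
  assert (Gh : good ah rhoh) by (repeat split; auto).
  set (zeta := fun n => proj1_sig (constructive_indefinite_description _ (root_exists a rho ah rhoh mu sigma q n G Gh Hq))).
  set (zetah := fun n => proj1_sig (constructive_indefinite_description _ (root_exists ah rhoh a rho (- mu) sigma q n Gh G Hq))).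
  assert (Z : forall n, lo rho n < zeta n < rho n /\ gfun a rho ah rhoh mu sigma q (zeta n) = 0).
  { intros n. unfold zeta. destruct (constructive_indefinite_description _ _). simpl. auto. }
  assert (Zh : forall n, lo rhoh n < zetah n < rhoh n /\ gfun ah rhoh a rho (- mu) sigma q (zetah n) = 0).
  { intros n. unfold zetah. destruct (constructive_indefinite_description _ _). simpl. auto. }
  clearbody zeta zetah.
  assert (Zp : forall n, 0 < zeta n).
  { intros n. destruct (Z n) as [[H _] _]. pose proof (lo_nonneg a rho n G). lra. }
  assert (Zhp : forall n, 0 < zetah n).
  { intros n. destruct (Zh n) as [[H _] _]. pose proof (lo_nonneg ah rhoh n Gh). lra. }
  exists zeta, zetah. split; [auto|]. split; [auto|].
  split. { intros n. split. apply Z. destruct (Z (S n)) as [[H _] _]. exact H. }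
  split. { intros n. split. apply Zh. destruct (Zh (S n)) as [[H _] _]. exact H. }
  intros z Hnp.
  assert (NP : forall x, z = RtoC x -> nonpole rho x /\ nonpole rhoh (- x)).
  { intros x ->. split; intros n E; apply Hnp; exists n.
    - left. rewrite E. reflexivity.
    - right. rewrite E, Ropp_involutive. reflexivity. }
  split.
  - intros Hphi. destruct z as [x y]. destruct (Req_dec y 0) as [Hy|Hy].
    + subst y. change (x, 0) with (RtoC x) in *. destruct (NP x eq_refl) as [P1 P2].
      destruct (Rtotal_order x 0) as [Hx|[Hx|Hx]].
      * assert (Hg : gfun a rho ah rhoh mu sigma q x = 0) by (apply (real_link a rho ah rhoh mu sigma q x G Gh); auto; lra).
        assert (Hg' : gfun ah rhoh a rho (- mu) sigma q (- x) = 0) by (rewrite swap_g; lra).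
        destruct (locate ah rhoh (- x) Gh ltac:(lra) P2) as [n Hn].
        exists n. right. f_equal.
        assert (- x = zetah n) by (apply (root_unique ah rhoh a rho (- mu) sigma q n); auto; apply Zh).
        lra.
      * exfalso. subst x. destruct Hphi as [S1 [S2 [_ [_ E]]]].
        apply (f_equal Re) in E. destruct S1, S2. unfold RtoC, Cmult, Cplus in E. simpl in E. nra.
      * assert (Hg : gfun a rho ah rhoh mu sigma q x = 0) by (apply (real_link a rho ah rhoh mu sigma q x G Gh); auto; lra).
        destruct (locate a rho x G Hx P1) as [n Hn].
        exists n. left. f_equal.
        apply (root_unique a rho ah rhoh mu sigma q n); auto; apply Z.
    + exfalso. exact (nonreal a rho ah rhoh mu sigma q x y Ha Hrho Hah Hrhoh Hq Hy Hphi).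
  - intros [n [E|E]].
    + destruct (NP _ E) as [P1 P2]. rewrite E. apply real_link; auto.
      pose proof (Zp n); lra. apply Z.
    + destruct (NP _ E) as [P1 P2]. rewrite E. apply real_link; auto.
      pose proof (Zhp n); lra.
      rewrite <- (Ropp_involutive (gfun _ _ _ _ _ _ _ _)), <- swap_g. rewrite Ropp_involutive. destruct (Zh n); lra. pose proof (Zhp n); lra.
Qed.
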